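(* Consider the following $n$-round process. In each round $i$, an adversary chooses a probability distribution $\mathcal{D}_i$ on $[0,1]$, possibly depending on the first $i-1$ rounds, and a sample $R_i\sim\mathcal{D}_i$ is drawn. Let $Z_1=1$ and $Z_{i+1}=Z_i-R_iZ_i$ for $i\ge1$, and let $Y=\sum_{i=1}^n Z_i\,\mathbb{E}[R_i]$, where $\mathbb{E}[R_i]$ denotes the mean of $\mathcal{D}_i$. Then for every real $q$ and every adversary strategy, $\Pr[Y>q]\le e\cdot\exp(-q)$. *)

(* Defs.v *)
From HB Require Import structures.
From mathcomp Require Import all_boot all_order all_algebra.
From mathcomp Require Import all_classical all_reals all_analysis.
From mathcomp Require Import measurable_realfun.

Set Implicit Arguments.
Unset Strict Implicit.
Unset Printing Implicit Defensive.

Import Order.TTheory GRing.Theory Num.Theory.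

Local Open Scope classical_set_scope.
Local Open Scope ring_scope.

(* An adversary strategy: in round i+1 (0-based index i), having seen the
   history h = (R_1, ..., R_i) : i.-tuple R, it picks a probability
   distribution [D i h] on the Borel sets of R.  *)
Definition strategy (R : realType) := forall i : nat, i.-tuple R -> probability R R.

Definition admissible (R : realType) (D : strategy R) : Prop :=
  (forall i (h : i.-tuple R), D i h [set` `[0%R, 1%R]] = 1%E) /\
  (forall i (B : set R), measurable B ->
     measurable_fun [set: i.-tuple R] (fun h : i.-tuple R => D i h B)).

Definition dmean (R : realType) (mu : probability R R) : R :=
  fine (\int[mu]_x (x%:E))%E.

(* [prob_gt D q k i h z y] is the conditional probability, given that the
   history so far is h (i rounds played) with current value Z_{i+1} = z and
   partial sum y = \sum_{j<=i} Z_j E[R_j], that after k more rounds the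
   final Y exceeds q.  It is the iterated-kernel (Ionescu-Tulcea) integral:
   in round i+1 the sample r ~ D i h is drawn, Z is updated to z - r z and
   Y accumulates z * E[R_{i+1}]. *)
Fixpoint prob_gt (R : realType) (D : strategy R) (q : R) (k : nat)
  (i : nat) (h : i.-tuple R) (z y : R) {struct k} : \bar R :=
  match k with
  | 0 => if (q < y)%R then 1%E else 0%E
  | k'.+1 =>
      (\int[D i h]_r
         prob_gt D q k' [tuple of rcons h r] (z - r * z) (y + z * dmean (D i h)))%E
  end.

Definition probY_gt (R : realType) (D : strategy R) (n : nat) (q : R) : \bar R :=
  prob_gt D q n [tuple] 1 0.

(* Main.v *)
Require Import Defs.
From HB Require Import structures.
From mathcomp Require Import all_boot all_order all_algebra.
From mathcomp Require Import all_classical all_reals all_analysis.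
From mathcomp Require Import measurable_realfun.
From mathcomp Require Import ring lra.

Import Order.TTheory GRing.Theory Num.Theory.
Local Open Scope ring_scope.

Section Aux.
Local Open Scope classical_set_scope.
Local Open Scope ring_scope.
Section R.
Variable R : realType.
Implicit Types c s x m : R.

Lemma expR_ge_id x : x <= expR (x - 1).
Proof. by have := expR_ge1Dx (x - 1); rewrite addrC subrK. Qed.

Lemma ptB c s : 0 < c -> 0 < s -> expR (1 - c / s) <= s / c.
Proof.
move=> c0 s0; set x := c / s.
have x0 : 0 < x by rewrite divr_gt0.
have -> : 1 - x = - (x - 1) by ring.
rewrite expRN.
have hx := expR_ge_id x.
have e0 := expR_gt0 (x - 1).
have -> : s / c = x^-1 by rewrite /x invf_div.
by rewrite lef_pV2 ?posrE.
Qed.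

Lemma ptA c s : 1 <= c -> 0 < s -> s <= 1 -> expR (1 - c / s) <= expR (1 - c) * s.
Proof.
move=> c1 s0 s1.
have -> : 1 - c / s = (1 - c) + (c - c / s) by ring.
suff h : expR (c - c / s) <= s.
  rewrite (expRD (1 - c)); apply: ler_wpM2l; [exact: expR_ge0| exact: h].
have hs : 1 <= s^-1 by rewrite invf_ge1.
apply: (@le_trans _ _ (expR (1 - s^-1))).
  rewrite ler_expR.
  have -> : c - c / s = c * (1 - s^-1) by rewrite mulrBr mulr1.
  have h1 : 1 - s^-1 <= 0 by lra.
  nra.
have -> : 1 - s^-1 = - (s^-1 - 1) by ring.
rewrite expRN.
have hx := expR_ge_id (s^-1).
have e0 := expR_gt0 (s^-1 - 1).
rewrite -[X in _ <= X]invrK lef_pV2 ?posrE ?invr_gt0 //.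
Qed.

Lemma finA c m : 0 <= m -> m <= 1 -> expR (1 - c) * (1 - m) <= expR (1 - (c + m)).
Proof.
move=> m0 m1; have -> : 1 - (c + m) = (1 - c) + (- m) by ring.
have h := expR_ge1Dx (- m).
have h2 : expR (1 - c) * (1 - m) <= expR (1 - c) * expR (- m).
  by apply: ler_wpM2l; [exact: expR_ge0| lra].
by apply: (le_trans h2); rewrite (expRD (1 - c)).
Qed.

Lemma finB c m : 0 < c -> c < 1 -> 0 <= m -> m <= 1 -> 1 - m <= c ->
  (1 - m) / c <= expR (1 - (c + m)).
Proof.
move=> c0 c1 m0 m1 mc; set x := (1 - m) / c.
have hx : x <= 1 by rewrite /x ler_pdivrMr // mul1r.
have hx0 : 0 <= x by rewrite /x divr_ge0 //; lra.
apply: (le_trans (expR_ge_id x)); rewrite ler_expR.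
have -> : 1 - (c + m) = c * (x - 1).
  by rewrite /x mulrBr mulrCA divff ?gt_eqF // mulr1; ring.
nra.
Qed.
End R.

Section M.
Variable R : realType.
Variable mu : probability R R.
Hypothesis H01 : mu [set` `[0%R, 1%R]] = 1%E.

Lemma le_int (f g : R -> \bar R) : (forall x, (0 <= f x)%E) ->
  (forall x, (f x <= g x)%E) -> (\int[mu]_x f x <= \int[mu]_x g x)%E.
Proof.
move=> f0 fg.
have g0 x : (0 <= g x)%E by apply: le_trans (fg x).
rewrite (@ge0_integralE _ _ _ mu _ f) // (@ge0_integralE _ _ _ mu _ g) //.
apply: le_ereal_sup => _ [h hf <-]; exists h => //= x.
apply: le_trans (hf x) _; rewrite !patchE; case: ifP => //.
Qed.

Definition clamp (r : R) : R := Order.min (Order.max r 0) 1.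

Lemma mclamp : measurable_fun setT clamp.
Proof.
have -> : clamp = ((id \max cst 0) \min cst 1) by apply: funext.
apply: measurable_minr; last exact: measurable_cst.
apply: measurable_maxr; [exact: measurable_id| exact: measurable_cst].
Qed.

Lemma clamp01 r : 0 <= clamp r <= 1.
Proof. rewrite /clamp; apply/andP; split.
- by rewrite le_min ler01 le_max lexx orbT.
- by rewrite ge_min lexx orbT.
Qed.

Lemma clampE r : r \in `[0, 1] -> clamp r = r.
Proof.
rewrite in_itv /= => /andP[r0 r1].
by rewrite /clamp (max_idPl r0) (min_idPl r1).
Qed.

Lemma mC01 : measurable (~` [set` `[(0:R), 1]]).
Proof. by apply: measurableC; exact: measurable_itv. Qed.

Lemma muC01 : mu (~` [set` `[(0:R), 1]]) = 0%E.
Proof. by rewrite probability_setC ?H01 ?subee //; exact: measurable_itv. Qed.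

Lemma int_clamp : (\int[mu]_x (clamp x)%:E = \int[mu]_x x%:E)%E.
Proof.
apply: ae_eq_integral => //.
  exact: (proj2 (measurable_EFinP _ _) mclamp).
exists (~` [set` `[(0:R), 1]]); split; [exact: mC01| exact: muC01|].
move=> x /= hx Hx; apply: hx => _; by rewrite clampE.
Qed.

Lemma int_clamp_bnd : (0 <= \int[mu]_x (clamp x)%:E <= 1)%E.
Proof.
apply/andP; split.
  by apply: integral_ge0 => x _; rewrite lee_fin; case/andP: (clamp01 x).
have -> : (1 = \int[mu]_x (cst 1%E) x)%E.
  by rewrite integral_cst // mul1e; apply/esym; exact: probability_setT.
apply: (@ge0_le_integral _ _ _ mu setT) => //.
- by move=> x _; rewrite lee_fin; case/andP: (clamp01 x).
- exact: (proj2 (measurable_EFinP _ _) mclamp).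
- by move=> x _; rewrite lee_fin; case/andP: (clamp01 x).
Qed.

Lemma dmean_clamp : (\int[mu]_x (clamp x)%:E)%E = (dmean mu)%:E.
Proof.
rewrite /dmean -int_clamp.
have /andP[h0 h1] := int_clamp_bnd.
by rewrite fineK // ge0_fin_numE // (le_lt_trans h1) // ltry.
Qed.

Definition C01 : set R := ~` [set` `[(0:R), 1]].

Lemma indC01 r : (\1_C01 r : R) = if r \in `[(0:R), 1] then 0 else 1.
Proof.
rewrite indicE /C01; case: ifPn => h.
  by rewrite memNset //= => /(_ h).
by rewrite mem_set //= => h'; move/negP: h; apply.
Qed.

Lemma mdmean : 0 <= dmean mu <= 1.
Proof. by have := int_clamp_bnd; rewrite dmean_clamp !lee_fin. Qed.

Lemma int_line (a : R) : 0 <= a ->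
  (\int[mu]_x ((a * (1 - clamp x))%:E + (\1_C01 x)%:E) = (a * (1 - dmean mu))%:E)%E.
Proof.
move=> a0.
have c0 x : 0 <= 1 - clamp x by case/andP: (clamp01 x) => _; rewrite subr_ge0.
have mc : measurable_fun setT (fun x => (1 - clamp x)%:E).
  apply: (proj2 (measurable_EFinP _ _)).
  by apply: measurable_funB; [exact: measurable_cst | exact: mclamp].
rewrite ge0_integralD //; last 3 first.
- by move=> x _; rewrite lee_fin mulr_ge0.
- apply: (proj2 (measurable_EFinP _ _)).
  apply: measurable_funM; first exact: measurable_cst.
  by apply: measurable_funB; [exact: measurable_cst | exact: mclamp].
- by apply: (proj2 (measurable_EFinP _ _)); apply: measurable_indic; exact: mC01.
rewrite integral_indic //; last exact: mC01.
transitivity (\int[mu]_x (a * (1 - clamp x))%:E + 0)%E.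
  by congr (_ + _)%E; rewrite setIT; exact: muC01.
rewrite adde0.
under eq_integral do rewrite EFinM.
rewrite ge0_integralZl_EFin //; last by move=> x _; rewrite lee_fin.
suff -> : (\int[mu]_x (1 - clamp x)%:E = (1 - dmean mu)%:E)%E by [].
have h : (\int[mu]_x ((1 - clamp x)%:E + (clamp x)%:E) = 1)%E.
  under eq_integral do rewrite -EFinD subrK.
  rewrite integral_cst // mul1e; exact: probability_setT.
rewrite ge0_integralD // in h; last 3 first.
- by move=> x _; rewrite lee_fin.
- by move=> x _; rewrite lee_fin; case/andP: (clamp01 x).
- exact: (proj2 (measurable_EFinP _ _) mclamp).
rewrite dmean_clamp in h.
by rewrite -[LHS](@addeK _ (dmean mu)%:E) // h EFinB.
Qed.

Definition pot (q z y : R) : R :=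
  if z < 0 then 1 else if z == 0 then (if q < y then 1 else 0)
  else if q < y + z then 1 else expR ((y + z - q) / z).

Lemma pot01 q z y : 0 <= pot q z y <= 1.
Proof.
rewrite /pot; case: ltP => z0; first by rewrite ler01 lexx.
case: eqP => ze; first by case: ifP; rewrite ?ler01 ?lexx.
have zp : 0 < z by rewrite lt_neqAle eq_sym z0 andbT; apply/eqP.
case: ltP => h; first by rewrite ler01 lexx.
rewrite expR_ge0 /= expR_le1.
rewrite ler_pdivrMr // mul0r; lra.
Qed.

Lemma int_le1 (g : R -> R) : (forall r, 0 <= g r <= 1) ->
  (\int[mu]_r (g r)%:E <= 1)%E.
Proof.
move=> g01.
have h : (\int[mu]_r (g r)%:E <= \int[mu]_r (cst 1%E) r)%E.
  by apply: le_int => r; rewrite lee_fin; case/andP: (g01 r).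
apply: (le_trans h).
rewrite integral_cst // mul1e; rewrite le_eqVlt; apply/orP; left; apply/eqP; exact: probability_setT.
Qed.

Lemma potN q z y : z < 0 -> pot q z y = 1.
Proof. by rewrite /pot => ->. Qed.
Lemma pot0 q y : pot q 0 y = if q < y then 1 else 0.
Proof. by rewrite /pot ltxx eqxx. Qed.
Lemma potP q z y : 0 < z ->
  pot q z y = if q < y + z then 1 else expR ((y + z - q) / z).
Proof. by move=> zp; rewrite /pot ltNge (ltW zp) /= gt_eqF. Qed.

Lemma pot_le_exp q z y : 0 < z -> pot q z y <= expR ((y + z - q) / z).
Proof.
move=> zp; rewrite potP //; case: ltP => h //.
have h1 : 0 <= (y + z - q) / z by rewrite divr_ge0 //; lra.
by have := expR_ge1Dx ((y + z - q) / z); lra.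
Qed.

Lemma step q z y :
  (\int[mu]_r (pot q (z - r * z) (y + z * dmean mu))%:E <= (pot q z y)%:E)%E.
Proof.
set m := dmean mu.
have /andP[m0 m1] : 0 <= m <= 1 := mdmean.
have int1 : (\int[mu]_r (pot q (z - r * z) (y + z * m))%:E <= 1)%E.
  by apply: int_le1 => r; exact: pot01.
case: (ltP z 0) => z0; first by rewrite potN.
case: (eqVneq z 0) => [ze|zne].
  subst z.
  under eq_integral do rewrite mulr0 subr0 mul0r addr0.
  rewrite integral_cst //.
  rewrite le_eqVlt; apply/orP; left; apply/eqP.
  by rewrite -[RHS]mule1; congr (_ * _)%E; exact: probability_setT.
have zp : 0 < z by rewrite lt_neqAle eq_sym zne.
case: (ltP q (y + z)) => hq; first by rewrite potP // hq.
rewrite potP // ltNge hq /=.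
set t := (q - y) / z.
have t1 : 1 <= t by rewrite /t ler_pdivlMr // mul1r; lra.
have -> : (y + z - q) / z = 1 - t by rewrite /t; field.
set c := t - m.
case: (leP c 0) => c0.
  apply: (le_trans int1); rewrite lee_fin.
  have h1 : 0 <= 1 - t by rewrite /c in c0; lra.
  by have := expR_ge1Dx (1 - t); lra.
pose a := if 1 <= c then expR (1 - c) else c^-1.
have a0 : 0 <= a by rewrite /a; case: ifP => _; [exact: expR_ge0| rewrite invr_ge0 ltW].
have pw r : ((pot q (z - r * z) (y + z * m))%:E <=
             (a * (1 - clamp r))%:E + (\1_C01 r)%:E)%E.
  rewrite -EFinD lee_fin indC01; case: ifPn => hr.
    rewrite clampE // addr0.
    move: hr; rewrite in_itv /= => /andP[r0 r1].
    case: (eqVneq r 1) => [->|rne].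
      rewrite mul1r subrr pot0 subrr mulr0.
      have hzm : z * m <= z by apply: ler_piMr; [exact: ltW|].
      have hq2 : y + z * m <= q by lra.
      by rewrite ltNge hq2.
    have sp : 0 < 1 - r by rewrite subr_gt0 lt_neqAle rne.
    have zs : z - r * z = z * (1 - r) by ring.
    rewrite zs; apply: (le_trans (pot_le_exp _ _ _ _)); first exact: mulr_gt0.
    have -> : (y + z * m + z * (1 - r) - q) / (z * (1 - r)) = 1 - c / (1 - r).
      by rewrite /c /t; field; rewrite ?gt_eqF // mulf_neq0 // gt_eqF.
    rewrite /a; case: ifP => c1.
      by apply: ptA; [exact: c1 | exact: sp | lra].
    by rewrite [c^-1 * _]mulrC; exact: (@ptB R c (1 - r) c0 sp).
  have /andP[p0 p1] := pot01 q (z - r * z) (y + z * m).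
  have := clamp01 r; move=> /andP[k0 k1].
  have : 0 <= a * (1 - clamp r) by apply: mulr_ge0 => //; lra.
  lra.
have h : (\int[mu]_r (pot q (z - r * z) (y + z * m))%:E <=
    \int[mu]_r ((a * (1 - clamp r))%:E + (\1_C01 r)%:E))%E.
  apply: le_int => [r|]; last exact: pw.
  by rewrite lee_fin; case/andP: (pot01 q (z - r * z) (y + z * m)).
apply: (le_trans h); rewrite int_line // -/m lee_fin.
have -> : 1 - t = 1 - (c + m) by rewrite /c subrK.
rewrite /a; case: ifP => c1.
  by apply: finA.
rewrite mulrC; apply: finB => //; first by rewrite ltNge c1.
by rewrite /c; lra.
Qed.
End M.
Arguments pot {R}. Arguments potN {R}. Arguments pot0 {R}. Arguments potP {R}.
Arguments pot01 {R}. Arguments step {R mu}. Arguments le_int {R mu}.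

Section Main.
Variable R : realType.
Variable D : strategy R.
Hypothesis HD : admissible D.

Lemma prob_gt_ge0 q k : forall i (h : i.-tuple R) z y, (0 <= prob_gt D q k h z y)%E.
Proof.
elim: k => [|k IH] i h z y /=; first by case: ifP.
by apply: integral_ge0 => r _; apply: IH.
Qed.

Lemma bound q k : forall i (h : i.-tuple R) z y,
  (prob_gt D q k h z y <= (pot q z y)%:E)%E.
Proof.
elim: k => [|k IH] i h z y /=.
  case: (ltP z 0) => z0; first by rewrite potN //; case: ifP; rewrite // lee_fin ler01.
  case: (eqVneq z 0) => [->|zne]; first by rewrite pot0; case: ifP.
  have zp : 0 < z by rewrite lt_neqAle eq_sym zne.
  case: ifP => hy; last by rewrite lee_fin; case/andP: (pot01 q z y).
  by rewrite potP // (_ : q < y + z) //; apply: (lt_trans hy); rewrite ltrDl.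
apply: le_trans; last exact: (step (HD.1 i h) q z y).
apply: le_int => [r|r]; first exact: prob_gt_ge0.
exact: IH.
Qed.
End Main.
End Aux.

Theorem mainTheorem15 (R : realType) (n : nat) (D : strategy R) (q : R) :
  admissible D ->
  (probY_gt D n q <= (expR 1 * expR (- q))%:E)%E.
Proof.
move=> HD; rewrite /probY_gt; apply: (le_trans (@bound R D HD q n 0 [tuple] 1 0)).
rewrite potP ?ltr01 // add0r divr1 lee_fin.
case: ltP => hq.
  have h1 : 0 <= 1 - q by lra.
  rewrite -expRD; by have := expR_ge1Dx (1 - q); lra.
by rewrite expRD.
Qed.
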